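(* Let $s>2$ be an integer, $A_s=\{0,1,\dots,s-1\}$, and let $A_0,A_1$ be disjoint subsets of $A_s$ with $A_0\cup A_1=A_s$, $A_0\neq A_s\neq A_1$. Let $f:[0,1]\to[0,1]$ be defined by $$f\big(\Delta^{s*}_{\alpha_1\alpha_2\dots\alpha_n\dots}\big)=\Delta^{2*}_{\beta_1\beta_2\dots\beta_n\dots},$$ where $\beta_1=0$ if $\alpha_1\in A_0$, $\beta_1=1$ if $\alpha_1\in A_1$, and for $n\ge 1$, $\beta_{n+1}=\beta_n$ if $\alpha_{n+1}=\alpha_n$ and $\beta_{n+1}=1-\beta_n$ if $\alpha_{n+1}\neq\alpha_n$. Then $f$ is continuous on $[0,1]$ and has unbounded (infinite) total variation on $[0,1]$.
   Context: $L_s=A_s\times A_s\times\cdots$ denotes the space of sequences $(\alpha_n)$ with $\alpha_n\in A_s$. The $s*$-representation is an encoding of $[0,1]$ topologically equivalent to the classical $s$-adic one: there is a continuous strictly monotone surjection $h_s:[0,1]\to[0,1]$ such that $\Delta^{s*}_{\alpha_1\alpha_2\dots}=h_s\big(\sum_{n\ge1}\alpha_n s^{-n}\big)$ for every $(\alpha_n)\in L_s$. Likewise the $2*$-representation is given by a continuous strictly monotone surjection $h_2:[0,1]\to[0,1]$ via $\Delta^{2*}_{\beta_1\beta_2\dots}=h_2\big(\sum_{n\ge1}\beta_n 2^{-n}\big)$, $\beta_n\in\{0,1\}$. The value of $f(x)$ given by the formula does not depend on which $s*$-code of $x$ is used, so $f$ is a well-defined function on $[0,1]$. *)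

(* Defs.v *)
From HB Require Import structures.
From mathcomp Require Import all_boot all_order all_algebra.
From mathcomp Require Import all_classical all_reals all_analysis.
Set Implicit Arguments. Unset Strict Implicit. Unset Printing Implicit Defensive.
Import Order.TTheory GRing.Theory Num.Theory.
Import numFieldNormedType.Exports.
Local Open Scope classical_set_scope.
Local Open Scope ring_scope.

(* Binary digit sequence beta_1 beta_2 ... (indexed from 0: beta n = beta_{n+1})
   built from the s-ary digit sequence alpha (alpha n = alpha_{n+1}):
   beta_1 = 1 iff alpha_1 \in A1 (i.e. = 0 iff alpha_1 \in A0);
   beta_{n+1} = beta_n if alpha_{n+1} = alpha_n, else 1 - beta_n. *)
Fixpoint beta_seq (s : nat) (A1 : {set 'I_s}) (alpha : nat -> 'I_s) (n : nat) : bool :=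
  match n with
  | 0 => alpha 0 \in A1
  | k.+1 => if alpha k.+1 == alpha k then beta_seq A1 alpha k
            else ~~ beta_seq A1 alpha k
  end.

Definition sadic_value (R : realType) (s : nat) (alpha : nat -> 'I_s) : R :=
  limn (fun N : nat => \sum_(0 <= n < N) ((nat_of_ord (alpha n))%:R / (s%:R ^+ n.+1) : R)).

Definition binary_value (R : realType) (beta : nat -> bool) : R :=
  limn (fun N : nat => \sum_(0 <= n < N) ((nat_of_bool (beta n))%:R / (2%:R ^+ n.+1) : R)).

Definition coding_map (R : realType) (h : R -> R) : Prop :=
  {within `[0, 1]%classic, continuous h} /\
  ({in `[0, 1]%classic &, forall x y, x < y -> h x < h y} \/
   {in `[0, 1]%classic &, forall x y, x < y -> h y < h x}) /\
  h @` `[0, 1]%classic = `[0, 1]%classic.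

(* Main.v *)
Require Import Defs.
From HB Require Import structures.
From mathcomp Require Import all_boot all_order all_algebra.
From mathcomp Require Import all_classical all_reals all_analysis.
From mathcomp Require Import ring lra zify.
Import Order.TTheory GRing.Theory Num.Theory.
Import numFieldNormedType.Exports.

Module Aux.
Set Implicit Arguments. Unset Strict Implicit. Unset Printing Implicit Defensive.
Local Open Scope classical_set_scope.
Local Open Scope ring_scope.

Section Digits.
Variable R : realType.
Variable r : nat.
Hypothesis r2 : (2 <= r)%N.

Definition Ps (d : nat -> nat) (N : nat) : R :=
  \sum_(0 <= n < N) ((d n)%:R / (r%:R ^+ n.+1) : R).
Definition Vs (d : nat -> nat) : R := limn (Ps d).

Lemma r_gt0 : 0 < (r%:R : R).
Proof. by rewrite ltr0n (leq_trans _ r2). Qed.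

Lemma Ps0 d : Ps d 0 = 0.
Proof. by rewrite /Ps big_geq. Qed.

Lemma PsS d N : Ps d N.+1 = Ps d N + (d N)%:R / (r%:R ^+ N.+1).
Proof. by rewrite /Ps big_nat_recr. Qed.

Lemma Ps_shift d N M :
  Ps d (N + M) = Ps d N + (r%:R ^+ N)^-1 * Ps (fun n => d (N + n)%N) M.
Proof.
elim: M => [|M IH]; first by rewrite addn0 Ps0 mulr0 addr0.
rewrite addnS PsS IH PsS mulrDr addrA; congr (_ + _).
have h1 : (r%:R : R) ^+ N != 0 by rewrite expf_neq0 // gt_eqF // r_gt0.
have h2 : (r%:R : R) ^+ M.+1 != 0 by rewrite expf_neq0 // gt_eqF // r_gt0.
rewrite -addnS exprD; field.
by rewrite h1 h2.
Qed.


Lemma Ps_ge0 d N : 0 <= Ps d N.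
Proof. by rewrite /Ps sumr_ge0 // => i _; rewrite divr_ge0 // exprn_ge0 // ltW // r_gt0. Qed.

Lemma Ps_ub d N : (forall n, d n < r)%N -> Ps d N <= 1 - (r%:R ^+ N)^-1.
Proof.
move=> hd; elim: N => [|N IH]; first by rewrite Ps0 expr0 invr1 subrr.
rewrite PsS.
have h : (d N)%:R + 1 <= (r%:R : R) by rewrite natr1 ler_nat.
have t0 : 0 < ((r%:R : R) ^+ N.+1)^-1 by rewrite invr_gt0 exprn_gt0 // r_gt0.
have e : ((r%:R : R) ^+ N)^-1 = r%:R * ((r%:R : R) ^+ N.+1)^-1.
  have h1 : (r%:R : R) ^+ N != 0 by rewrite expf_neq0 // gt_eqF // r_gt0.
  have h2 : (r%:R : R) != 0 by rewrite gt_eqF // r_gt0.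
  rewrite exprS; field; by rewrite h1 h2.
rewrite e in IH.
have := mulr_ge0 (ltW t0) (_ : 0 <= r%:R - 1 - (d N)%:R); rewrite /= -/(_ / _).
move=> H; have {}H := H ltac:(lra).
rewrite [X in _ + X <= _]mulrC; set t := (_ ^-1) in t0 IH H *; nra.
Qed.

Lemma Ps_nd d : nondecreasing_seq (Ps d).
Proof.
apply/nondecreasing_seqP => n.
by rewrite PsS lerDl divr_ge0 // ?exprn_ge0 // ?ltW // ?r_gt0.
Qed.

Lemma Ps_cvg d : (forall n, d n < r)%N -> cvgn (Ps d).
Proof.
move=> hd; apply/cvg_ex; eexists; apply: nondecreasing_cvgn; first exact: Ps_nd.
exists 1 => _ [n _ <-]; apply: le_trans (Ps_ub n hd) _.
by rewrite gerBl invr_ge0 exprn_ge0 // ltW // r_gt0.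
Qed.

Lemma Vs_shift d N : (forall n, d n < r)%N ->
  Vs d = Ps d N + (r%:R ^+ N)^-1 * Vs (fun n => d (N + n)%N).
Proof.
move=> hd.
have hd' : forall n, (d (N + n)%N < r)%N by move=> n; exact: hd.
have c' := Ps_cvg hd'.
have H : (fun M => Ps d N + (r%:R ^+ N)^-1 * Ps (fun n => d (N + n)%N) M) @ \oo
    --> Ps d N + (r%:R ^+ N)^-1 * Vs (fun n => d (N + n)%N).
  apply: cvgD; first exact: cvg_cst.
  exact: cvgMl_tmp.
rewrite /Vs; apply: cvg_lim => //.
rewrite -(cvg_shiftn N); apply: cvg_trans H => /=.
apply: near_eq_cvg; near=> M; by rewrite addnC Ps_shift.
Unshelve. all: by end_near.
Qed.

Lemma Vs_ge0 d : (forall n, d n < r)%N -> 0 <= Vs d.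
Proof.
move=> hd; apply: limr_ge; first exact: Ps_cvg.
by near=> n; exact: Ps_ge0.
Unshelve. all: by end_near.
Qed.

Lemma Vs_le1 d : (forall n, d n < r)%N -> Vs d <= 1.
Proof.
move=> hd; apply: limr_le; first exact: Ps_cvg.
near=> n; apply: le_trans (Ps_ub n hd) _.
by rewrite gerBl invr_ge0 exprn_ge0 // ltW // r_gt0.
Unshelve. all: by end_near.
Qed.

Lemma Vs_const c : (c < r)%N -> Vs (fun _ => c) = c%:R / (r%:R - 1).
Proof.
move=> hc; have := @Vs_shift (fun _ => c) 1 (fun _ => hc).
rewrite PsS Ps0 add0r expr1 /=.
set V := Vs _ => e.
have r1 : (r%:R : R) - 1 != 0.
  by rewrite subr_eq0 pnatr_eq1; case: r r2 => [|[|]].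
have r0 : (r%:R : R) != 0 by rewrite gt_eqF // r_gt0.
apply: (mulIf r1); rewrite divfK //.
have e2 : V * r%:R = c%:R + V.
  rewrite {1}e; field; exact: r0.
by rewrite mulrBr mulr1 e2 addrK.
Qed.

Lemma Vs_ext d d' : d =1 d' -> Vs d = Vs d'.
Proof. by move=> /funext ->. Qed.


Lemma Ps_eq d d' m : (forall n, (n < m)%N -> d n = d' n) -> Ps d m = Ps d' m.
Proof. by move=> h; apply: eq_big_nat => n /andP[_ nm]; rewrite h. Qed.

Lemma Vs_bounds d N : (forall n, d n < r)%N ->
  Ps d N <= Vs d <= Ps d N + (r%:R ^+ N)^-1.
Proof.
move=> hd; rewrite (@Vs_shift d N hd).
have hd' : forall n, (d (N + n)%N < r)%N by move=> n; exact: hd.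
have := Vs_ge0 hd'; have := Vs_le1 hd'.
have : 0 < (r%:R ^+ N : R)^-1 by rewrite invr_gt0 exprn_gt0 // r_gt0.
set t := (_ ^-1); set V := Vs _ => t0 V1 V0.
apply/andP; split; first by rewrite lerDl mulr_ge0 // ltW.
by rewrite lerD2l ler_piMr // ltW.
Qed.

End Digits.

Section Codes.
Variable R : realType.
Variable s : nat.
Hypothesis s2 : (2 < s)%N.
Variable A1 : {set 'I_s}.

Let s1 : (2 <= s)%N. Proof. exact: ltnW. Qed.

Definition ext (a : nat -> 'I_s) m (c : 'I_s) : nat -> 'I_s :=
  fun i => if (i < m)%N then a i else c.

Definition Sv (a : nat -> 'I_s) : R := Vs R s (fun n => nat_of_ord (a n)).
Definition bt (a : nat -> 'I_s) := beta_seq A1 a.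
Definition Gv (a : nat -> 'I_s) : R := Vs R 2 (fun n => nat_of_bool (bt a n)).
Definition Bn (a : nat -> 'I_s) m : R := Ps R 2 (fun n => nat_of_bool (bt a n)) m.
Definition Pn (a : nat -> 'I_s) m : R := Ps R s (fun n => nat_of_ord (a n)) m.

Lemma SvE a : sadic_value R a = Sv a. Proof. by []. Qed.
Lemma GvE a : binary_value R (beta_seq A1 a) = Gv a. Proof. by []. Qed.

Lemma dig_lt (a : nat -> 'I_s) n : (a n < s)%N. Proof. exact: ltn_ord. Qed.
Lemma bit_lt (b : nat -> bool) n : (nat_of_bool (b n) < 2)%N. Proof. by case: (b n). Qed.

Lemma bt_prefix a a' i : (forall j, (j <= i)%N -> a j = a' j) -> bt a i = bt a' i.
Proof.
rewrite /bt; elim: i => [|i IH] h /=; first by rewrite h.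
rewrite h // (h i) ?leqnSn // IH // => j ji; apply: h; exact: leqW.
Qed.

Lemma bt_ext_tail a m c k : bt (ext a m c) (m + k) = bt (ext a m c) m.
Proof.
elim: k => [|k IH]; first by rewrite addn0.
rewrite addnS /bt /= -/(bt _ _) IH /ext.
have h1 : ((m + k).+1 < m)%N = false by apply/negbTE; rewrite -leqNgt; lia.
have h2 : ((m + k) < m)%N = false by apply/negbTE; rewrite -leqNgt; lia.
by rewrite h1 h2 eqxx.
Qed.

Lemma bt_ext_m a m c : bt (ext a m.+1 c) m.+1 =
  if c == a m then bt a m else ~~ bt a m.
Proof.
rewrite /bt /= -/(bt _ _) /ext ltnn ltnSn.
rewrite (@bt_prefix (ext a m.+1 c) a m) //.
by move=> j jm; rewrite /ext ltnS jm.
Qed.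

Lemma Sv_split a m : Sv a = Pn a m + ((s%:R : R) ^+ m)^-1 * Sv (fun n => a (m + n)%N).
Proof. exact: (@Vs_shift R s s1 _ m (fun n => dig_lt a n)). Qed.

Lemma Gv_split a m : Gv a = Bn a m + ((2%:R : R) ^+ m)^-1 * Vs R 2 (fun n => nat_of_bool (bt a (m + n)%N)).
Proof. exact: (@Vs_shift R 2 (leqnn 2) _ m (fun n => bit_lt _ n)). Qed.


Lemma Sv_bounds a m : Pn a m <= Sv a <= Pn a m + ((s%:R : R) ^+ m)^-1.
Proof. exact: (@Vs_bounds R s s1 _ m (fun n => dig_lt a n)). Qed.

Lemma Gv_bounds a m : Bn a m <= Gv a <= Bn a m + ((2%:R : R) ^+ m)^-1.
Proof. exact: (@Vs_bounds R 2 (leqnn 2) _ m (fun n => bit_lt _ n)). Qed.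

Lemma Sv01 a : 0 <= Sv a <= 1.
Proof. by have := Sv_bounds a 0; rewrite /Pn Ps0 expr0 invr1 add0r. Qed.

Lemma Gv01 a : 0 <= Gv a <= 1.
Proof. by have := Gv_bounds a 0; rewrite /Bn Ps0 expr0 invr1 add0r. Qed.

Lemma Sv_ext a m c : Sv (ext a m c) =
  Pn a m + ((s%:R : R) ^+ m)^-1 * ((nat_of_ord c)%:R / (s%:R - 1)).
Proof.
rewrite (Sv_split _ m); congr (_ + _ * _).
  by apply: Ps_eq => n nm; rewrite /ext nm.
rewrite /Sv -(@Vs_const R s s1 c (ltn_ord c)); apply: Vs_ext => n.
by rewrite /ext ltnNge leq_addr.
Qed.

Lemma Gv_ext a m c : Gv (ext a m c) =
  Bn a m + ((2%:R : R) ^+ m)^-1 * (nat_of_bool (bt (ext a m c) m))%:R.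
Proof.
rewrite (Gv_split _ m); congr (_ + _ * _).
  apply: Ps_eq => n nm; congr (nat_of_bool _ : nat); apply: bt_prefix => j jn.
  by rewrite /ext (leq_ltn_trans jn nm).
set b := nat_of_bool _.
have b2 : (b < 2)%N by rewrite /b; case: (bt _ _).
rewrite (@Vs_ext R 2 _ (fun _ => b)); last by move=> n; rewrite bt_ext_tail.
rewrite (@Vs_const R 2 (leqnn 2) b b2).
have -> : (2%:R : R) - 1 = 1 by rewrite -natr1 addrK.
by rewrite divr1.
Qed.

Fixpoint idx (a : nat -> 'I_s) m : nat :=
  if m is m'.+1 then (s * idx a m' + a m')%N else 0%N.

Lemma Pn_idx a m : Pn a m = (idx a m)%:R / ((s%:R : R) ^+ m).
Proof.
elim: m => [|m IH]; first by rewrite /Pn Ps0 /= mul0r.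
rewrite /Pn PsS -/(Pn a m) IH /= natrD natrM exprS.
have h1 : (s%:R : R) ^+ m != 0 by rewrite expf_neq0 // pnatr_eq0 -lt0n (ltn_trans _ s2).
have h2 : (s%:R : R) != 0 by rewrite pnatr_eq0 -lt0n (ltn_trans _ s2).
field; by rewrite h1 h2.
Qed.

Lemma BnS a m : Bn a m.+1 = Bn a m + (nat_of_bool (bt a m))%:R / (2%:R ^+ m.+1).
Proof. exact: PsS. Qed.

End Codes.

Lemma divmod_uniq (s k1 x1 k2 x2 : nat) : (x1 < s)%N -> (x2 < s)%N ->
  (s * k1 + x1 = s * k2 + x2)%N -> k1 = k2 /\ x1 = x2.
Proof.
move=> h1 h2 e; case: (ltngtP k1 k2) => h.
- have : (s * k1.+1 <= s * k2)%N by rewrite leq_mul2l h orbT.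
  rewrite mulnS; lia.
- have : (s * k2.+1 <= s * k1)%N by rewrite leq_mul2l h orbT.
  rewrite mulnS; lia.
- by subst; split => //; lia.
Qed.

Section Cont.
Variable R : realType.
Variable s : nat.
Hypothesis s2 : (2 < s)%N.
Variable A1 : {set 'I_s}.

Let s1 : (2 <= s)%N. Proof. exact: ltnW. Qed.
Lemma s0 : (0 < s)%N. Proof. exact: ltn_trans s2. Qed.
Lemma top_lt : (s.-1 < s)%N. Proof. by rewrite ltn_predL s0. Qed.
Definition top : 'I_s := Ordinal top_lt.
Definition bot : 'I_s := Ordinal s0.

Lemma idx_inj (a a' : nat -> 'I_s) m : idx a m = idx a' m ->
  forall i, (i < m)%N -> a i = a' i.
Proof.
elim: m => [|m IH] //= e i.
have [e1 e2] := divmod_uniq (ltn_ord (a m)) (ltn_ord (a' m)) e.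
rewrite ltnS leq_eqVlt => /orP[/eqP -> | im]; first exact: val_inj.
exact: IH.
Qed.

Lemma idx_Bn (a a' : nat -> 'I_s) m : idx a m = idx a' m ->
  Bn R A1 a m = Bn R A1 a' m.
Proof.
move=> e; apply: Ps_eq => n nm; congr (nat_of_bool _ : nat).
apply: bt_prefix => j jn; apply: (idx_inj e); exact: leq_ltn_trans jn nm.
Qed.


Lemma inv2S m : ((2%:R : R) ^+ m.+1)^-1 = ((2%:R : R) ^+ m)^-1 / 2.
Proof. by rewrite exprS invfM mulrC. Qed.

Lemma adj_bits (a a' : nat -> 'I_s) m : idx a' m = (idx a m).+1 ->
  Bn R A1 a m + ((2%:R : R) ^+ m)^-1 * (nat_of_bool (bt A1 (ext a m top) m))%:R =
  Bn R A1 a' m + ((2%:R : R) ^+ m)^-1 * (nat_of_bool (bt A1 (ext a' m bot) m))%:R.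
Proof.
elim: m => [|m IH] e; first by [].
have e' : (s * idx a' m + a' m = (s * idx a m + a m).+1)%N by exact: e.
rewrite !bt_ext_m !BnS.
case: (ltnP (a m).+1 s) => h.
- have [e1 e2] : idx a' m = idx a m /\ nat_of_ord (a' m) = (a m).+1.
    by apply: (divmod_uniq (ltn_ord (a' m)) h); rewrite e' addnS.
  have -> : (top == a m) = false.
    by apply/negbTE; apply/eqP => /(congr1 val) /= hh; move: h; rewrite -hh prednK ?ltnn // s0.
  have -> : (bot == a' m) = false by apply/negbTE; apply/eqP => /(congr1 val) /=; rewrite e2.
  rewrite (idx_Bn e1) !inv2S.
  set u := ((2%:R : R) ^+ m)^-1.
  by case: (bt A1 a m); case: (bt A1 a' m); rewrite /= ?mulr1 ?mulr0 ?mul1r; lra.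
- have am : nat_of_ord (a m) = s.-1 by have := ltn_ord (a m); lia.
  have [e1 e2] : idx a' m = (idx a m).+1 /\ nat_of_ord (a' m) = 0%N.
    by apply: (divmod_uniq (ltn_ord (a' m)) s0); rewrite e' mulnS am; lia.
  have {IH} := IH e1.
  have -> : (top == a m) = true by apply/eqP; apply: val_inj; rewrite /= am.
  have -> : (bot == a' m) = true by apply/eqP; apply: val_inj; rewrite /= e2.
  case: m e e' e1 e2 am h => [|m] e e' e1 e2 am h; first by rewrite /= in e1.
  rewrite !bt_ext_m.
  have -> : bt A1 a m.+1 = if top == a m then bt A1 a m else ~~ bt A1 a m.
    rewrite /bt /=; congr (if _ then _ else _); apply/eqP/eqP => H; rewrite -H;
    by apply: val_inj; rewrite /= am.
  have -> : bt A1 a' m.+1 = if bot == a' m then bt A1 a' m else ~~ bt A1 a' m.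
    rewrite /bt /=; congr (if _ then _ else _); apply/eqP/eqP => H; rewrite -H;
    by apply: val_inj; rewrite /= e2.
  rewrite !inv2S.
  set u := ((2%:R : R) ^+ m.+1)^-1.
  set b := (if top == a m then _ else _); set b' := (if bot == a' m then _ else _).
  by case: b; case: b'; rewrite /= ?mulr1 ?mulr0 ?mul1r; lra.
Qed.


Lemma Gext_bounds (a : nat -> 'I_s) m c :
  Bn R A1 a m <= Gv R A1 (ext a m c) <= Bn R A1 a m + ((2%:R : R) ^+ m)^-1.
Proof.
rewrite Gv_ext //; have e0 : 0 < ((2%:R : R) ^+ m)^-1 by rewrite invr_gt0 exprn_gt0.
case: (bt _ _ _) => /=; rewrite ?mulr1 ?mulr0 ?addr0; apply/andP; split. all: try lra.
Qed.

Lemma adj_G (a a' : nat -> 'I_s) m : idx a' m = (idx a m).+1 ->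
  Gv R A1 (ext a m top) = Gv R A1 (ext a' m bot).
Proof. by move=> e; rewrite !Gv_ext // (adj_bits e). Qed.

Lemma Sv_idx (a : nat -> 'I_s) m :
  (idx a m)%:R * ((s%:R : R) ^+ m)^-1 <= Sv R a <= ((idx a m).+1)%:R * ((s%:R : R) ^+ m)^-1.
Proof.
have := Sv_bounds R s2 a m; rewrite (Pn_idx R s2) -natr1 mulrDl mul1r.
by [].
Qed.

Lemma idx_close (a a' : nat -> 'I_s) m :
  `|Sv R a - Sv R a'| < ((s%:R : R) ^+ m)^-1 -> (idx a' m < (idx a m).+2)%N.
Proof.
move=> h; have := Sv_idx a m; have := Sv_idx a' m.
have u0 : 0 < ((s%:R : R) ^+ m)^-1 by rewrite invr_gt0 exprn_gt0 // ltr0n s0.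
set u := _^-1 in h u0 *; move: h; rewrite ltr_norml.
set k := idx a m; set k' := idx a' m => /andP[h1 h2] /andP[h3 h4] /andP[h5 h6].
rewrite -(ltr_nat R) -!natr1.
have : (k'%:R - (k%:R + 1 + 1)) * u < 0 by nra.
by rewrite pmulr_llt0 // subr_lt0.
Qed.

Lemma modulus (a a' : nat -> 'I_s) m :
  `|Sv R a - Sv R a'| < ((s%:R : R) ^+ m)^-1 ->
  `|Gv R A1 a - Gv R A1 a'| <= 2 * ((2%:R : R) ^+ m)^-1.
Proof.
move=> h.
have h' : `|Sv R a' - Sv R a| < ((s%:R : R) ^+ m)^-1 by rewrite distrC.
have k1 := idx_close h; have k2 := idx_close h'.
have := Gv_bounds R A1 a m; have := Gv_bounds R A1 a' m.
have e0 : 0 < ((2%:R : R) ^+ m)^-1 by rewrite invr_gt0 exprn_gt0.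
move=> /andP[g1 g2] /andP[g3 g4].
rewrite ler_norml.
have [E|[E|E]] : idx a' m = idx a m \/ idx a' m = (idx a m).+1 \/ idx a m = (idx a' m).+1 by lia.
- rewrite (idx_Bn (esym E)) in g3 g4; apply/andP; split; lra.
- have := Gext_bounds a m top; have := Gext_bounds a' m bot.
  rewrite -(adj_G E) => /andP[g5 g6] /andP[g7 g8]; apply/andP; split; lra.
- have := Gext_bounds a' m top; have := Gext_bounds a m bot.
  rewrite -(@adj_G a' a m E) => /andP[g5 g6] /andP[g7 g8]; apply/andP; split; lra.
Qed.

End Cont.

Lemma small_pow (R : realType) (s : nat) (x : R) : (1 < s)%N ->
  (forall n, `|x| <= ((s%:R : R) ^+ n)^-1) -> x = 0.
Proof.
move=> s1 h; apply/eqP; apply/negPn/negP => x0.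
have d0 : 0 < `|x| by rewrite normr_gt0.
set n := (Num.truncn (`|x|^-1)).+1.
have h1 : `|x|^-1 < n%:R.
  have di : 0 <= `|x|^-1 by rewrite invr_ge0 ltW.
  by have := truncn_itv di => /andP[_].
have h2 : (n%:R : R) <= (s%:R) ^+ n by rewrite -natrX ler_nat ltnW // ltn_expl.
have := h n; rewrite -[X in X <= _]invrK lef_pV2 ?posrE ?invr_gt0 ?exprn_gt0 ?ltr0n ?(ltn_trans _ s1) //.
move=> h3; have := lt_le_trans h1 h2; rewrite ltNge h3 //.
Qed.

Section Surj.
Variable R : realType.
Variable s : nat.
Hypothesis s2 : (2 < s)%N.

Let s1 : (1 < s)%N. Proof. exact: ltnW. Qed.

Lemma trunc_step (z : R) : 0 <= z ->
  (Num.truncn ((s%:R : R) * z) = s * Num.truncn z + (Num.truncn (s%:R * z) - s * Num.truncn z))%N /\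
  (Num.truncn ((s%:R : R) * z) - s * Num.truncn z < s)%N.
Proof.
move=> z0; have /andP[t1 t2] := truncn_itv z0.
have sz0 : 0 <= (s%:R : R) * z by rewrite mulr_ge0.
have sp : 0 < (s%:R : R) by rewrite ltr0n (ltn_trans _ s2).
have a1 : (s * Num.truncn z <= Num.truncn ((s%:R : R) * z))%N.
  by rewrite truncn_ge_nat // natrM ler_pM2l.
have a2 : (Num.truncn ((s%:R : R) * z) < s * (Num.truncn z).+1)%N.
  by rewrite truncn_lt_nat // natrM ltr_pM2l.
split; [lia | rewrite mulnS in a2; lia].
Qed.

Definition tr (y : R) n := Num.truncn (y * (s%:R) ^+ n).
Definition dig (y : R) n : 'I_s := Ordinal (ltn_pmod (tr y n.+1) (s0 s2)).

Lemma idx_dig (y : R) n : 0 <= y < 1 -> idx (dig y) n = tr y n.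
Proof.
move=> /andP[y0 y1]; elim: n => [|n IH].
  by rewrite /= /tr expr0 mulr1; apply/esym/truncn_def; rewrite y0 y1.
rewrite /= IH /tr.
have z0 : 0 <= y * (s%:R : R) ^+ n by rewrite mulr_ge0 // exprn_ge0.
have [e1 e2] := trunc_step z0.
have -> : y * (s%:R : R) ^+ n.+1 = s%:R * (y * s%:R ^+ n) by rewrite exprS; ring.
move: e1 e2.
move: (Num.truncn (s%:R * (y * s%:R ^+ n))) (Num.truncn (y * (s%:R : R) ^+ n)) => T t e1 e2 /=.
have dq : T = (s * (T %/ s) + T %% s)%N by rewrite mulnC -divn_eq.
have [q1 q2] := divmod_uniq e2 (ltn_pmod T (s0 s2)) (etrans (esym e1) dq).
by rewrite q1 -dq.
Qed.


Lemma Sv_surj (y : R) : 0 <= y <= 1 -> exists a : nat -> 'I_s, Sv R a = y.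
Proof.
move=> /andP[y0 y1]; case: (eqVneq y 1) => [->|yn1].
  exists (fun _ => top s2); rewrite /Sv (@Vs_const R s s1 _ (top_lt s2)) /=.
  have h : (s.-1)%:R = (s%:R : R) - 1 by rewrite -[in RHS](prednK (s0 s2)) -natr1 addrK.
  rewrite h divff // subr_eq0 pnatr_eq1; by case: s s2 => [|[|]].
have y1' : y < 1 by rewrite lt_neqAle yn1 y1.
exists (dig y); apply/eqP; rewrite -subr_eq0; apply/eqP.
apply: (small_pow s1) => n.
have := Sv_idx R s2 (dig y) n; rewrite idx_dig ?y0 ?y1' //.
have u0 : 0 < ((s%:R : R) ^+ n)^-1 by rewrite invr_gt0 exprn_gt0 // ltr0n (s0 s2).
have sn0 : 0 < ((s%:R : R) ^+ n) by rewrite exprn_gt0 // ltr0n (s0 s2).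
have : 0 <= y * (s%:R : R) ^+ n by rewrite mulr_ge0 // ltW.
move=> /truncn_itv /andP[t1 t2].
rewrite /tr; move: t1 t2; set t := Num.truncn _ => t1 t2 /andP[h1 h2].
have e : y = (y * (s%:R : R) ^+ n) * ((s%:R : R) ^+ n)^-1 by rewrite mulfK // gt_eqF.
have t1' : t%:R * ((s%:R : R) ^+ n)^-1 <= y by rewrite e ler_pM2r.
have t2' : y < t.+1%:R * ((s%:R : R) ^+ n)^-1 by rewrite {1}e ltr_pM2r.
move: t2' h2; rewrite -natr1 mulrDl mul1r => t2' h2.
rewrite ler_norml; apply/andP; split; lra.
Qed.

End Surj.

Lemma cont_eps (R : realType) (g : R -> R) :
  {within `[0, 1], continuous g} -> forall x, 0 <= x <= 1 -> forall e, 0 < e ->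
  exists2 d, 0 < d & forall y, 0 <= y <= 1 -> `|x - y| < d -> `|g x - g y| < e.
Proof.
move=> /subspace_continuousP hg x x01 e e0.
have := hg x; rewrite /= in_itv /= => /(_ x01) /cvgrPdist_lt /(_ e e0).
rewrite near_withinE => /nbhs_ballP [d /= d0 hd].
exists d => // y y01 xy; apply: hd; last by rewrite /= in_itv.
by rewrite /ball /=.
Qed.

Lemma eps_cont (R : realType) (g : R -> R) :
  (forall x, 0 <= x <= 1 -> forall e, 0 < e ->
  exists2 d, 0 < d & forall y, 0 <= y <= 1 -> `|x - y| < d -> `|g x - g y| < e) ->
  {within `[0, 1], continuous g}.
Proof.
move=> h; apply/subspace_continuousP => x; rewrite /= in_itv /= => x01.
apply/cvgrPdist_lt => e e0; rewrite near_withinE.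
have [d d0 hd] := h x x01 e e0.
apply/nbhs_ballP; exists d => // y /= xy; rewrite in_itv /= => y01.
exact: hd.
Qed.

Lemma mem01 (R : realType) (x : R) : (x \in `[0, 1]%classic) = (0 <= x <= 1).
Proof. by apply/idP/idP; rewrite in_setE /= in_itv. Qed.

Lemma inv_inc (R : realType) (h : R -> R) :
  {in `[0, 1]%classic &, forall x y, x < y -> h x < h y} ->
  forall y0, 0 <= y0 <= 1 -> forall eta, 0 < eta ->
  exists2 d, 0 < d & forall y, 0 <= y <= 1 -> `|h y0 - h y| < d -> `|y0 - y| < eta.
Proof.
move=> inc y0 y01 eta eta0.
have inc' : forall x y, 0 <= x <= 1 -> 0 <= y <= 1 -> x < y -> h x < h y.
  by move=> x y hx hy; apply: inc; rewrite mem01.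
have winc : forall x y, 0 <= x <= 1 -> 0 <= y <= 1 -> x <= y -> h x <= h y.
  move=> x y hx hy; rewrite le_eqVlt => /orP[/eqP -> //|xy]; exact/ltW/inc'.
have [dR dR0 hR] : exists2 dR, 0 < dR & forall y, 0 <= y <= 1 -> y0 + eta <= y -> dR <= h y - h y0.
  case: (lerP (y0 + eta) 1) => c.
  - have p : 0 <= y0 + eta <= 1 by apply/andP; split => //; move: y01 => /andP[? ?]; lra.
    exists (h (y0 + eta) - h y0); first by rewrite subr_gt0; apply: inc' => //; lra.
    by move=> y y1 hy; rewrite lerD2r; apply: winc.
  - by exists 1 => // y /andP[_ y1] hy; lra.
have [dL dL0 hL] : exists2 dL, 0 < dL & forall y, 0 <= y <= 1 -> y <= y0 - eta -> dL <= h y0 - h y.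
  case: (lerP 0 (y0 - eta)) => c.
  - have p : 0 <= y0 - eta <= 1 by apply/andP; split => //; move: y01 => /andP[? ?]; lra.
    exists (h y0 - h (y0 - eta)); first by rewrite subr_gt0; apply: inc' => //; lra.
    by move=> y y1 hy; rewrite lerD2l lerN2; apply: winc.
  - by exists 1 => // y /andP[y0' _] hy; lra.
exists (Num.min dR dL); first by rewrite lt_min dR0 dL0.
move=> y y1; rewrite lt_min => /andP[a1 a2].
rewrite ltr_norml; apply/andP; split; rewrite ltNge; apply/negP => hy.
- have := hR y y1 ltac:(lra); move: a1; rewrite ltr_norml => /andP[? ?]; lra.
- have := hL y y1 ltac:(lra); move: a2; rewrite ltr_norml => /andP[? ?]; lra.
Qed.

Lemma inv_mono (R : realType) (h : R -> R) :
  {in `[0, 1]%classic &, forall x y, x < y -> h x < h y} \/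
  {in `[0, 1]%classic &, forall x y, x < y -> h y < h x} ->
  forall y0, 0 <= y0 <= 1 -> forall eta, 0 < eta ->
  exists2 d, 0 < d & forall y, 0 <= y <= 1 -> `|h y0 - h y| < d -> `|y0 - y| < eta.
Proof.
case=> [inc|dec]; first exact: inv_inc.
have inc : {in `[0, 1]%classic &, forall x y, x < y -> (fun z => - h z) x < (fun z => - h z) y}.
  by move=> x y hx hy xy /=; rewrite ltrN2; exact: dec.
move=> y0 y01 eta eta0; have [d d0 hd] := inv_inc inc y01 eta0.
exists d => // y y1 hy; apply: (hd y y1) => /=.
have -> : (- h y0) - (- h y) = - (h y0 - h y) by ring.
by rewrite normrN.
Qed.

Lemma pow2_small (R : realType) (d : R) : 0 < d -> exists m, 2 * ((2%:R : R) ^+ m)^-1 < d.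
Proof.
move=> d0; set n := (Num.truncn (2 / d)).+1; exists n.
have di : 0 <= 2 / d by rewrite divr_ge0 // ltW.
have h1 : 2 / d < n%:R by have := truncn_itv di => /andP[_].
have h2 : (n%:R : R) <= (2%:R) ^+ n by rewrite -natrX ler_nat ltnW // ltn_expl.
have p : 0 < (2%:R : R) ^+ n by rewrite exprn_gt0.
have h3 : 2 / d < (2%:R : R) ^+ n by exact: lt_le_trans h1 h2.
rewrite ltr_pdivrMr // in h3.
by rewrite ltr_pdivrMr // mulrC.
Qed.

Lemma f_cont (R : realType) (s : nat) (s2 : (2 < s)%N) (A1 : {set 'I_s})
  (h_s h_2 : R -> R) (hhs : coding_map h_s) (hh2 : coding_map h_2) (f : R -> R)
  (hf : forall alpha : nat -> 'I_s,
      f (h_s (sadic_value R alpha)) = h_2 (binary_value R (beta_seq A1 alpha))) :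
  {within `[0, 1], continuous f}.
Proof.
have img : forall (h : R -> R), coding_map h -> forall x, 0 <= x <= 1 ->
    exists2 y, 0 <= y <= 1 & h y = x.
  move=> h [_ [_ hi]] x x01.
  have : (h @` `[0, 1]) x by rewrite hi /= in_itv.
  by case=> y /=; rewrite in_itv /= => y01 <-; exists y.
apply: eps_cont => x0 x01 e e0.
have [y0 y01 <-] := img _ hhs x0 x01.
have [a0 ea0] := Sv_surj s2 y01.
have g01 := Gv01 R A1 a0.
have [d2 d20 hd2] := cont_eps hh2.1 g01 e0.
have [m hm] := pow2_small d20.
have eta0 : 0 < ((s%:R : R) ^+ m)^-1 by rewrite invr_gt0 exprn_gt0 // ltr0n (s0 s2).
have [d d0 hd] := inv_mono hhs.2.1 y01 eta0.
exists d => // x x1 hx.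
have [y y1 ey] := img _ hhs x x1.
have [a ea] := Sv_surj s2 y1.
move: hx; rewrite -ey => hx.
have := hd y y1 hx; rewrite -ea0 -ea => hS.
have := hf a0; have := hf a; rewrite !SvE !GvE => -> ->.
apply: hd2; first exact: Gv01.
apply: le_lt_trans hm; exact: modulus.
Qed.

Section TVl.
Variable R : realType.
Variable f : R -> R.
Local Notation TV := (@total_variation R).

Lemma TV_sub a c d b : a <= c -> c <= d -> d <= b -> (TV c d f <= TV a b f)%E.
Proof.
move=> ac cd db.
rewrite (total_variationD f ac (le_trans cd db)).
rewrite (total_variationD f cd db).
apply: le_trans (_ : (0 + (TV c d f + 0) <= _)%E).
  by rewrite add0e adde0.
apply: leeD; first exact: total_variation_ge0.
by apply: leeD => //; exact: total_variation_ge0.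
Qed.

Lemma TV_sup2 a a1 b1 a2 b2 b : a <= a1 -> a1 <= b1 -> b1 <= a2 -> a2 <= b2 -> b2 <= b ->
  (TV a1 b1 f + TV a2 b2 f <= TV a b f)%E.
Proof.
move=> h1 h2 h3 h4 h5.
apply: le_trans (TV_sub h1 (le_trans h2 (le_trans h3 h4)) h5).
rewrite (total_variationD f h2 (le_trans h3 h4)).
apply: leeD => //.
exact: TV_sub.
Qed.

Lemma TV_sup3 x0 x1 x2 x3 x4 x5 x6 x7 : x0 <= x1 -> x1 <= x2 -> x2 <= x3 -> x3 <= x4 ->
  x4 <= x5 -> x5 <= x6 -> x6 <= x7 ->
  (TV x1 x2 f + TV x3 x4 f + TV x5 x6 f <= TV x0 x7 f)%E.
Proof.
move=> h1 h2 h3 h4 h5 h6 h7.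
apply: le_trans (TV_sup2 h1 h2 h3 (le_trans h4 (le_trans h5 h6)) h7).
rewrite -addeA; apply: leeD => //.
by apply: TV_sup2.
Qed.

Lemma TV_pts a b u v : a <= u <= b -> a <= v <= b ->
  ((`|f u - f v|)%:E <= TV a b f)%E.
Proof.
move=> /andP[au ub] /andP[av vb].
case: (lerP u v) => uv.
  apply: le_trans (TV_sub au uv vb); rewrite distrC; exact: total_variation_ge.
apply: le_trans (TV_sub av (ltW uv) ub); exact: total_variation_ge (ltW uv).
Qed.

End TVl.

Definition smono (R : realType) (h : R -> R) :=
  {in `[0, 1]%classic &, forall x y, x < y -> h x < h y} \/
  {in `[0, 1]%classic &, forall x y, x < y -> h y < h x}.

Section Mono.
Variable R : realType.
Variable h : R -> R.

Lemma inc_w : {in `[0, 1]%classic &, forall x y, x < y -> h x < h y} ->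
  forall u v, 0 <= u <= 1 -> 0 <= v <= 1 -> u <= v -> h u <= h v.
Proof.
move=> inc u v hu hv; rewrite le_eqVlt => /orP[/eqP -> //|uv].
by apply/ltW/inc => //; rewrite mem01.
Qed.

Lemma dec_w : {in `[0, 1]%classic &, forall x y, x < y -> h y < h x} ->
  forall u v, 0 <= u <= 1 -> 0 <= v <= 1 -> u <= v -> h v <= h u.
Proof.
move=> dec u v hu hv; rewrite le_eqVlt => /orP[/eqP -> //|uv].
by apply/ltW/dec => //; rewrite mem01.
Qed.

Lemma mono_add : smono h -> forall u v w, 0 <= u -> u <= v -> v <= w -> w <= 1 ->
  `|h w - h u| = `|h w - h v| + `|h v - h u|.
Proof.
move=> hm u v w u0 uv vw w1.
have hu : 0 <= u <= 1 by apply/andP; split => //; lra.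
have hv : 0 <= v <= 1 by apply/andP; split => //; lra.
have hw : 0 <= w <= 1 by apply/andP; split => //; lra.
case: hm => [inc|dec].
- have := inc_w inc hu hv uv; have := inc_w inc hv hw vw => a b.
  rewrite !ger0_norm ?subr_ge0 //; first ring; lra.
- have := dec_w dec hu hv uv; have := dec_w dec hv hw vw => a b.
  rewrite !ler0_norm ?subr_le0 //; first ring; lra.
Qed.

Lemma mono_pos : smono h -> forall u v, 0 <= u -> u < v -> v <= 1 -> 0 < `|h v - h u|.
Proof.
move=> hm u v u0 uv v1.
have hu : u \in `[0, 1]%classic by rewrite mem01; apply/andP; split => //; lra.
have hv : v \in `[0, 1]%classic by rewrite mem01; apply/andP; split => //; lra.
rewrite normr_gt0 subr_eq0; case: hm => [inc|dec].
- by rewrite gt_eqF // inc.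
- by rewrite lt_eqF // dec.
Qed.

End Mono.

Section TVx.
Variable R : realType.
Variables (f h : R -> R).
Hypothesis hm : smono h.
Hypothesis hinto : forall y, 0 <= y <= 1 -> 0 <= h y <= 1.
Variable M : R.
Hypothesis hM : total_variation 0 1 f = M%:E.

Definition TVx (u v : R) := total_variation (Order.min (h u) (h v)) (Order.max (h u) (h v)) f.

Lemma TVx_fin u v : 0 <= u <= 1 -> 0 <= v <= 1 ->
  TVx u v = (fine (TVx u v))%:E /\ 0 <= fine (TVx u v) <= M.
Proof.
move=> hu hv; have /andP[a1 a2] := hinto hu; have /andP[b1 b2] := hinto hv.
have m0 : 0 <= Order.min (h u) (h v) by rewrite le_min a1 b1.
have m1 : Order.max (h u) (h v) <= 1 by rewrite ge_max a2 b2.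
have mm : Order.min (h u) (h v) <= Order.max (h u) (h v).
  by rewrite ge_min le_max lexx.
have := TV_sub f m0 mm m1; rewrite hM -/(TVx u v).
have := total_variation_ge0 f mm; rewrite -/(TVx u v).
by case: (TVx u v) => [r| |] //= r0 rM; rewrite -!lee_fin r0 rM.
Qed.

Lemma TVx_sup3 p0 p1 p2 p3 p4 p5 p6 p7 : 0 <= p0 -> p0 <= p1 -> p1 <= p2 -> p2 <= p3 -> p3 <= p4 ->
  p4 <= p5 -> p5 <= p6 -> p6 <= p7 -> p7 <= 1 ->
  fine (TVx p1 p2) + fine (TVx p3 p4) + fine (TVx p5 p6) <= fine (TVx p0 p7).
Proof.
move=> h0 h1 h2 h3 h4 h5 h6 h7 h8.
have q0 : 0 <= p0 <= 1 by apply/andP; split; lra.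
have q1 : 0 <= p1 <= 1 by apply/andP; split; lra.
have q2 : 0 <= p2 <= 1 by apply/andP; split; lra.
have q3 : 0 <= p3 <= 1 by apply/andP; split; lra.
have q4 : 0 <= p4 <= 1 by apply/andP; split; lra.
have q5 : 0 <= p5 <= 1 by apply/andP; split; lra.
have q6 : 0 <= p6 <= 1 by apply/andP; split; lra.
have q7 : 0 <= p7 <= 1 by apply/andP; split; lra.
have [e1 _] := TVx_fin q1 q2.
have [e2 _] := TVx_fin q3 q4.
have [e3 _] := TVx_fin q5 q6.
have [e0 _] := TVx_fin q0 q7.
rewrite -lee_fin !EFinD -e1 -e2 -e3 -e0 /TVx.
case: hm => [inc|dec].
- have w := inc_w inc.
  rewrite (min_l (w _ _ q1 q2 h2)) (max_r (w _ _ q1 q2 h2)).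
  rewrite (min_l (w _ _ q3 q4 h4)) (max_r (w _ _ q3 q4 h4)).
  rewrite (min_l (w _ _ q5 q6 h6)) (max_r (w _ _ q5 q6 h6)).
  have h07 : p0 <= p7 by lra.
  rewrite (min_l (w _ _ q0 q7 h07)) (max_r (w _ _ q0 q7 h07)).
  by apply: TV_sup3; apply: w.
- have w := dec_w dec.
  rewrite (min_r (w _ _ q1 q2 h2)) (max_l (w _ _ q1 q2 h2)).
  rewrite (min_r (w _ _ q3 q4 h4)) (max_l (w _ _ q3 q4 h4)).
  rewrite (min_r (w _ _ q5 q6 h6)) (max_l (w _ _ q5 q6 h6)).
  have h07 : p0 <= p7 by lra.
  rewrite (min_r (w _ _ q0 q7 h07)) (max_l (w _ _ q0 q7 h07)).
  rewrite [X in (X <= _)%E]addeC [X in (_ + X <= _)%E]addeC addeA.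
  by apply: TV_sup3; apply: w.
Qed.


Lemma TVx_pts l r u v : 0 <= l -> l <= u <= r -> l <= v <= r -> r <= 1 ->
  `|f (h u) - f (h v)| <= fine (TVx l r).
Proof.
move=> l0 /andP[lu ur] /andP[lv vr] r1.
have ql : 0 <= l <= 1 by apply/andP; split; lra.
have qr : 0 <= r <= 1 by apply/andP; split; lra.
have qu : 0 <= u <= 1 by apply/andP; split; lra.
have qv : 0 <= v <= 1 by apply/andP; split; lra.
have lr : l <= r by lra.
have [e _] := TVx_fin ql qr.
rewrite -lee_fin -e /TVx.
case: hm => [inc|dec].
- have w := inc_w inc.
  rewrite (min_l (w _ _ ql qr lr)) (max_r (w _ _ ql qr lr)).
  by apply: TV_pts; rewrite ?w.
- have w := dec_w dec.
  rewrite (min_r (w _ _ ql qr lr)) (max_l (w _ _ ql qr lr)).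
  by apply: TV_pts; rewrite ?w.
Qed.

End TVx.

Section Core.
Variable R : realType.
Variable s : nat.
Hypothesis s2 : (2 < s)%N.
Variable A1 : {set 'I_s}.
Variables (h_s h_2 f : R -> R).
Hypothesis hs : smono h_s.
Hypothesis hinto : forall y, 0 <= y <= 1 -> 0 <= h_s y <= 1.
Hypothesis h2m : smono h_2.
Hypothesis h2c : forall x, 0 <= x <= 1 -> forall e, 0 < e ->
  exists2 d, 0 < d & forall y, 0 <= y <= 1 -> `|x - y| < d -> `|h_2 x - h_2 y| < e.
Hypothesis hf : forall a, f (h_s (Sv R a)) = h_2 (Gv R A1 a).
Variable M : R.
Hypothesis hM : total_variation 0 1 f = M%:E.

Let s1 : (2 <= s)%N. Proof. exact: ltnW. Qed.
Let sR0 : 0 < (s%:R : R). Proof. by rewrite ltr0n (s0 s2). Qed.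

Definition Lr (a : nat -> 'I_s) m :=
  fine (TVx f h_s (Pn R a m) (Pn R a m + ((s%:R : R) ^+ m)^-1)).
Definition mu (a : nat -> 'I_s) m :=
  `|h_2 (Bn R A1 a m + ((2%:R : R) ^+ m)^-1) - h_2 (Bn R A1 a m)|.

Lemma Pn_b (a : nat -> 'I_s) m : 0 <= Pn R a m /\ Pn R a m + ((s%:R : R) ^+ m)^-1 <= 1.
Proof.
split; first exact: Ps_ge0.
have := @Ps_ub R s s1 (fun n => nat_of_ord (a n)) m (fun n => ltn_ord (a n)).
rewrite /Pn; lra.
Qed.

Lemma Bn_b (a : nat -> 'I_s) m : 0 <= Bn R A1 a m /\ Bn R A1 a m + ((2%:R : R) ^+ m)^-1 <= 1.
Proof.
split; first exact: Ps_ge0.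
have := @Ps_ub R 2 (leqnn 2) (fun n => nat_of_bool (bt A1 a n)) m (fun n => bit_lt _ n).
rewrite /Bn; lra.
Qed.

Lemma Lr_ge0 a m : 0 <= Lr a m.
Proof.
have [p0 p1] := Pn_b a m.
have e0 : 0 < ((s%:R : R) ^+ m)^-1 by rewrite invr_gt0 exprn_gt0.
have q1 : 0 <= Pn R a m <= 1 by apply/andP; split; lra.
have q2 : 0 <= Pn R a m + ((s%:R : R) ^+ m)^-1 <= 1 by apply/andP; split; lra.
by have [_ /andP[]] := TVx_fin hinto hM q1 q2.
Qed.

Lemma Lr_leM a m : Lr a m <= M.
Proof.
have [p0 p1] := Pn_b a m.
have e0 : 0 < ((s%:R : R) ^+ m)^-1 by rewrite invr_gt0 exprn_gt0.
have q1 : 0 <= Pn R a m <= 1 by apply/andP; split; lra.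
have q2 : 0 <= Pn R a m + ((s%:R : R) ^+ m)^-1 <= 1 by apply/andP; split; lra.
by have [_ /andP[]] := TVx_fin hinto hM q1 q2.
Qed.


Lemma Sv_in (a : nat -> 'I_s) m c :
  Pn R a m <= Sv R (ext a m c) <= Pn R a m + ((s%:R : R) ^+ m)^-1.
Proof.
rewrite Sv_ext //.
have e0 : 0 < ((s%:R : R) ^+ m)^-1 by rewrite invr_gt0 exprn_gt0.
have s10 : 0 < (s%:R : R) - 1.
  by rewrite subr_gt0 (_ : 1 = 1%:R) // ltr_nat (ltn_trans _ s2).
have c0 : 0 <= (nat_of_ord c)%:R / ((s%:R : R) - 1) by rewrite divr_ge0 // ltW.
have c1 : (nat_of_ord c)%:R / ((s%:R : R) - 1) <= 1.
  rewrite ler_pdivrMr // mul1r.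
  have h : (nat_of_ord c)%:R + 1 <= (s%:R : R) by rewrite natr1 ler_nat ltn_ord.
  lra.
apply/andP; split; first by rewrite lerDl mulr_ge0 // ltW.
by rewrite lerD2l ler_piMr // ltW.
Qed.

Lemma L_base (a : nat -> 'I_s) n : mu a n.+1 <= Lr a n.+1.
Proof.
pose c : 'I_s := if a n == bot s2 then top s2 else bot s2.
have cn : (c == a n) = false.
  apply/negbTE; rewrite /c; case: (eqVneq (a n) (bot s2)) => [->|ne].
    by apply/eqP => /(congr1 val) /=; move: s2; lia.
  by rewrite eq_sym.
have [p0 p1] := Pn_b a n.+1.
have := TVx_pts hs hinto hM p0 (Sv_in a n.+1 (a n)) (Sv_in a n.+1 c) p1.
rewrite -/(Lr a n.+1) !hf !Gv_ext // !bt_ext_m eqxx cn /mu.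
by case: (bt A1 a n) => /=; rewrite ?mulr1 ?mulr0 ?addr0 // distrC.
Qed.


Lemma Pn_child (g : nat -> 'I_s) m c :
  Pn R (ext g m c) m.+1 = Pn R g m + (nat_of_ord c)%:R / ((s%:R : R) ^+ m.+1).
Proof.
rewrite /Pn PsS /ext ltnn; congr (_ + _).
by apply: Ps_eq => i im; rewrite im.
Qed.

Lemma L_sup3_lt (g : nat -> 'I_s) m (x y z : 'I_s) : (x < y)%N -> (y < z)%N ->
  Lr (ext g m x) m.+1 + Lr (ext g m y) m.+1 + Lr (ext g m z) m.+1 <= Lr g m.
Proof.
move=> xy yz; rewrite /Lr !Pn_child.
have [p0 p1] := Pn_b g m.
have e0 : 0 < ((s%:R : R) ^+ m.+1)^-1 by rewrite invr_gt0 exprn_gt0.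
have E : ((s%:R : R) ^+ m)^-1 = s%:R * ((s%:R : R) ^+ m.+1)^-1.
  by rewrite exprS invfM mulrA mulfV ?mul1r // gt_eqF.
rewrite E in p1 *.
move: p0 p1 e0; set P := Pn R g m; set e := _^-1 => p0 p1 e0.
have hX : 0 <= (nat_of_ord x)%:R :> R by [].
have hXY : (nat_of_ord x)%:R + 1 <= (nat_of_ord y)%:R :> R by rewrite natr1 ler_nat.
have hYZ : (nat_of_ord y)%:R + 1 <= (nat_of_ord z)%:R :> R by rewrite natr1 ler_nat.
have hZS : (nat_of_ord z)%:R + 1 <= s%:R :> R by rewrite natr1 ler_nat.
move: hX hXY hYZ hZS; set X := (nat_of_ord x)%:R; set Y := (nat_of_ord y)%:R;
  set Z := (nat_of_ord z)%:R; set S := s%:R => hX hXY hYZ hZS.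
apply: (TVx_sup3 hs hinto hM).
all: try (rewrite -?addrA ?lerDl ?lerD2l).
all: try nra.
Qed.


Lemma L_sup3 (g : nat -> 'I_s) m (x y z : 'I_s) : x != y -> y != z -> x != z ->
  Lr (ext g m x) m.+1 + Lr (ext g m y) m.+1 + Lr (ext g m z) m.+1 <= Lr g m.
Proof.
move=> nxy nyz nxz.
have key := @L_sup3_lt g m.
case: (ltngtP x y) => h1; last by move: nxy => /eqP []; exact: val_inj.
all: case: (ltngtP y z) => h2; last by move: nyz => /eqP []; exact: val_inj.
all: case: (ltngtP x z) => h3; last by move: nxz => /eqP []; exact: val_inj.
all: first [ have := key _ _ _ h1 h2 | have := key _ _ _ h1 h3 | have := key _ _ _ h2 h1
  | have := key _ _ _ h2 h3 | have := key _ _ _ h3 h1 | have := key _ _ _ h3 h2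
  | have := key _ _ _ h1 h2 ]; try lra.
all: exfalso; lia.
Qed.


Lemma Bn_ext (g : nat -> 'I_s) m c : Bn R A1 (ext g m c) m = Bn R A1 g m.
Proof.
apply: Ps_eq => i im; congr (nat_of_bool _ : nat); apply: bt_prefix => j ji.
by rewrite /ext (leq_ltn_trans ji im).
Qed.

Lemma mu_add (g : nat -> 'I_s) n c : g n.+1 = g n -> c != g n ->
  mu g n.+1 = mu g n.+2 + mu (ext g n.+1 c) n.+2.
Proof.
move=> gn cn; rewrite /mu (@BnS R s A1 g n.+1) (@BnS R s A1 (ext g n.+1 c) n.+1) Bn_ext bt_ext_m (negbTE cn).
have -> : bt A1 g n.+1 = bt A1 g n by rewrite /bt /= gn eqxx.
have [b0 b1] := Bn_b g n.+1.
rewrite [((2%:R : R) ^+ n.+2)^-1]inv2S.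
move: b0 b1; set B := Bn R A1 g n.+1; set e := ((2%:R : R) ^+ n.+1)^-1 => b0 b1.
have e0 : 0 < e by rewrite invr_gt0 exprn_gt0.
have M1 := @mono_add R h_2 h2m B (B + e / 2) (B + e) b0 ltac:(lra) ltac:(lra) b1.
case: (bt A1 g n) => /=; rewrite ?mul1r ?mul0r ?addr0.
- have -> : B + e / 2 + e / 2 = B + e by field.
  rewrite M1; lra.
- have -> : B + e / 2 + e / 2 = B + e by field.
  rewrite M1; lra.
Qed.


Lemma mu_lim (g : nat -> 'I_s) m e : 0 < e -> exists N, mu g (m + N) < e.
Proof.
move=> e0.
have q01 := Gv01 R A1 g.
have e20 : 0 < e / 2 by rewrite divr_gt0.
have [d d0 hd] := h2c q01 e20.
have [N hN] := pow2_small d0.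
exists N.
have [b0 b1] := Bn_b g (m + N).
have := Gv_bounds R A1 g (m + N).
have t0 : 0 < ((2%:R : R) ^+ (m + N))^-1 by rewrite invr_gt0 exprn_gt0.
have tN : ((2%:R : R) ^+ (m + N))^-1 <= ((2%:R : R) ^+ N)^-1.
  rewrite exprD invfM ler_piMl ?invr_ge0 ?exprn_ge0 //.
  by rewrite invf_le1 ?exprn_gt0 // exprn_ege1 // ler1n.
have tN0 : 0 < ((2%:R : R) ^+ N)^-1 by rewrite invr_gt0 exprn_gt0.
move: b0 b1 t0 tN hN; rewrite /mu; set B := Bn R A1 g (m + N); set t := _^-1; set u := _^-1.
set q := Gv R A1 g => b0 b1 t0 tN hN /andP[g1 g2].
have y1 : 0 <= B <= 1 by apply/andP; split; lra.
have y2 : 0 <= B + t <= 1 by apply/andP; split; lra.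
have d1 : `|q - B| < d by rewrite ger0_norm; lra.
have d2 : `|q - (B + t)| < d by rewrite ler0_norm; lra.
have := hd _ y1 d1; have := hd _ y2 d2 => k2 k1.
have := ler_normD (h_2 (B + t) - h_2 q) (h_2 q - h_2 B).
rewrite addrA subrK distrC in k2 *.
lra.
Qed.


Lemma mu_pos (a : nat -> 'I_s) m : 0 < mu a m.
Proof.
have [b0 b1] := Bn_b a m.
have t0 : 0 < ((2%:R : R) ^+ m)^-1 by rewrite invr_gt0 exprn_gt0.
apply: (mono_pos h2m b0) => //; lra.
Qed.

Lemma c1_lt : (1 < s)%N. Proof. exact: s1. Qed.
Lemma c2_lt : (2 < s)%N. Proof. exact: s2. Qed.
Definition o0 : 'I_s := Ordinal (s0 s2).
Definition o1 : 'I_s := Ordinal c1_lt.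
Definition o2 : 'I_s := Ordinal c2_lt.

Lemma pick2 (d : 'I_s) : exists c1 c2 : 'I_s, [/\ c1 != d, c2 != d & c1 != c2].
Proof.
case: (eqVneq d o0) => [->|h0].
  by exists o1, o2; split; apply/eqP => /(congr1 val).
case: (eqVneq d o1) => [->|h1].
  by exists o0, o2; split; apply/eqP => /(congr1 val).
by exists o0, o1; split; rewrite // eq_sym.
Qed.

Lemma L_ge k : forall (a : nat -> 'I_s) n, 2 ^+ k * mu a n.+1 <= Lr a n.+1.
Proof.
elim: k => [|k IH] a n; first by rewrite expr0 mul1r L_base.
set d := a n; pose g := ext a n.+1 d.
have gi : forall i, (n <= i)%N -> g i = d.
  move=> i ni; rewrite /g /ext; case: ltnP => // ilt.
  by have -> : i = n by apply/eqP; rewrite eqn_leq ni -ltnS ilt.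
have Lg : Lr g n.+1 = Lr a n.+1.
  by rewrite /Lr /Pn (@Ps_eq R s _ (fun n0 => nat_of_ord (a n0))) // => i im; rewrite /g /ext im.
have mg : mu g n.+1 = mu a n.+1 by rewrite /mu /g Bn_ext.
have [c1 [c2 [n1 n2 n12]]] := pick2 d.
have K0 : 0 <= (2 : R) ^+ k by rewrite exprn_ge0.
have chain : forall N, Lr g (n.+1 + N) + 2 ^+ k.+1 * (mu g n.+1 - mu g (n.+1 + N)) <= Lr g n.+1.
  elim => [|N IHN]; first by rewrite addn0 subrr mulr0 addr0.
  rewrite addnS; move: IHN; rewrite addSn => IHN.
  set m := (n + N)%N in IHN *.
  have gm : g m.+1 = g m by rewrite !gi // /m ?leq_addr // leqW // leq_addr.
  have gmd : g m.+1 = d by rewrite gi // /m leqW // leq_addr.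
  have S3 := @L_sup3 g m.+1 (g m.+1) c1 c2 ltac:(by rewrite gmd eq_sym) ltac:(by []) ltac:(by rewrite gmd eq_sym).
  have eg : ext g m.+1 (g m.+1) = g.
    apply: funext => i; rewrite /ext; case: ltnP => // mi.
    by rewrite gmd gi // (leq_trans _ mi) // /m leqW // leq_addr.
  rewrite eg in S3.
  have I1 := IH (ext g m.+1 c1) m.+1.
  have I2 := IH (ext g m.+1 c2) m.+1.
  have A1' := @mu_add g m c1 gm ltac:(by rewrite -gm gmd).
  have A2' := @mu_add g m c2 gm ltac:(by rewrite -gm gmd).
  have E1 : mu (ext g m.+1 c1) m.+2 = mu g m.+1 - mu g m.+2 by rewrite A1'; ring.
  have E2 : mu (ext g m.+1 c2) m.+2 = mu g m.+1 - mu g m.+2 by rewrite A2'; ring.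
  rewrite E1 in I1; rewrite E2 in I2.
  rewrite exprS in IHN *.
  move: I1 I2 IHN S3 K0; set K := (2 : R) ^+ k; rewrite !mulrBr => I1 I2 IHN S3 K0.
  rewrite -!mulrA in IHN *.
  lra.
have fin : forall e, 0 < e -> 2 ^+ k.+1 * mu g n.+1 - 2 ^+ k.+1 * e <= Lr g n.+1.
  move=> e e0; have [N hN] := mu_lim g n.+1 e0.
  have := chain N; have := Lr_ge0 g (n.+1 + N).
  have K1 : 0 < (2 : R) ^+ k.+1 by rewrite exprn_gt0.
  move: K1 hN; set K := (2 : R) ^+ k.+1 => K1 hN.
  nra.
rewrite -Lg -mg; rewrite leNgt; apply/negP => H.
have K1 : 0 < (2 : R) ^+ k.+1 by rewrite exprn_gt0.
move: K1 H fin; set K := (2 : R) ^+ k.+1 => K1 H fin.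
have e0 : 0 < (K * mu g n.+1 - Lr g n.+1) / (4 * K) by rewrite divr_gt0 ?subr_gt0 // mulr_gt0.
have := fin _ e0.
have -> : K * ((K * mu g n.+1 - Lr g n.+1) / (4 * K)) = (K * mu g n.+1 - Lr g n.+1) / 4.
  by field; rewrite gt_eqF.
lra.
Qed.


Lemma TV_contra : False.
Proof.
pose a : nat -> 'I_s := fun _ => o0.
have m0 := mu_pos a 1.
have L1 := Lr_leM a 1.
have L0 := Lr_ge0 a 1.
have q0 : 0 <= M / mu a 1 by rewrite divr_ge0 ?(le_trans L0 L1) // ltW.
set k := (Num.truncn (M / mu a 1)).+1.
have h1 : M / mu a 1 < k%:R by have := truncn_itv q0 => /andP[_].
have h2 : (k%:R : R) <= 2 ^+ k by rewrite -natrX ler_nat ltnW // ltn_expl.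
have := L_ge k a 0.
rewrite ltr_pdivrMr // in h1.
have : k%:R * mu a 1 <= 2 ^+ k * mu a 1 by rewrite ler_pM2r.
lra.
Qed.

End Core.

End Aux.
Import Aux.
Local Open Scope ring_scope.

Theorem theorem4 (R : realType) (s : nat) (hs2 : (2 < s)%N)
  (A0 A1 : {set 'I_s})
  (hdisj : A0 :&: A1 = finset.set0) (hcov : A0 :|: A1 = [set: 'I_s])
  (hA0 : A0 != [set: 'I_s]) (hA1 : A1 != [set: 'I_s])
  (h_s h_2 : R -> R) (hhs : coding_map h_s) (hh2 : coding_map h_2)
  (f : R -> R)
  (hf : forall alpha : nat -> 'I_s,
      f (h_s (sadic_value R alpha)) = h_2 (binary_value R (beta_seq A1 alpha))) :
  ({within `[0, 1]%classic, continuous f})%classic /\ total_variation 0 1 f = +oo%E.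
Proof.
split; first exact: (f_cont hs2 hhs hh2 hf).
have ge0 := @total_variation_ge0 R 0 1 f ler01.
have hinto : forall y : R, 0 <= y <= 1 -> 0 <= h_s y <= 1.
  move=> y y01; case: hhs => [_ [_ hi]].
  have : ((h_s @` `[0, 1]) (h_s y))%classic by exists y => //=; rewrite in_itv.
  by rewrite hi /= in_itv.
have hf' : forall a, f (h_s (Sv R a)) = h_2 (Gv R A1 a) by move=> a; exact: hf.
move: ge0; case E: (total_variation 0 1 f) => [M| |] // _.
exfalso.
exact: (@TV_contra R s hs2 A1 h_s h_2 f hhs.2.1 hinto hh2.2.1 (cont_eps hh2.1) hf' M E).
Qed.
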